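(* Let $a,b\in\mathbb Q$ with $a,b>0$ such that the quaternion algebra $D=\left(\frac{a,b}{\mathbb Q}\right)$ (generators $i,j$, relations $i^2=a$, $j^2=b$, $ij=-ji$) is a division algebra, with the involution $\ast$ determined by $i^\ast=i$, $j^\ast=j$. Let $K=\mathbb Q(i)$ (on which $\ast$ is the identity), and let $N_1,N_2$ be the positive cones of the two orderings of $K\cong\mathbb Q(\sqrt a)$, with $i\in N_1$ and $-i\in N_2$. Then: (i) $b\in N_1\cap N_2$, but neither $N_1$ nor $N_2$ is of the form $M\cap K$ for a unital hermitian cone $M$ on $(D,\ast)$; (ii) with respect to the right $K$-basis $1,j$ of $D$, left regular representation $\lambda\colon D\to M_2(K)$, $A=\mathrm{diag}(1,b)$ and $X^\#=A^{-1}X^{T}A$, there exist two distinct unital hermitian cones $L_1\neq L_2$ on $(M_2(K),\#)$ with $\lambda^{-1}(L_1)=\lambda^{-1}(L_2)$.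
   Context: A unital hermitian cone on a ring $R$ with involution $\ast$ is a subset $M\subseteq\{r:r^\ast=r\}$ with $1\in M$, $M+M\subseteq M$, $aMa^\ast\subseteq M$ for all $a\in R$, and $M\cap-M=\{0\}$. The left regular representation is defined by $de_\tau=\sum_\sigma e_\sigma\lambda(d)_{\sigma\tau}$ for the basis $(e_1,e_2)=(1,j)$. *)

(* Defs.v *)
From HB Require Import structures.
From mathcomp Require Import all_boot all_order all_algebra.
Set Implicit Arguments. Unset Strict Implicit. Unset Printing Implicit Defensive.
Import Order.TTheory GRing.Theory Num.Theory.
Local Open Scope ring_scope.

Record InvRing := {
  carrier :> Type;
  r0 : carrier; r1 : carrier;
  radd : carrier -> carrier -> carrier;
  rmul : carrier -> carrier -> carrier;
  ropp : carrier -> carrier;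
  rstar : carrier -> carrier }.

Definition herm_cone (R : InvRing) (M : R -> Prop) : Prop :=
  (forall r, M r -> rstar r = r) /\
  M (r1 R) /\
  (forall x y, M x -> M y -> M (radd x y)) /\
  (forall c r, M r -> M (rmul (rmul c r) (rstar c))) /\
  (forall r, M r -> M (ropp r) -> r = r0 R).
Arguments herm_cone : clear implicits.

(* x0 + x1 i + x2 j + x3 ij, with i^2 = a, j^2 = b, ij = -ji. *)
Record quat := mkQ { q0 : rat; q1 : rat; q2 : rat; q3 : rat }.

Definition qzero := mkQ 0 0 0 0.
Definition qone := mkQ 1 0 0 0.
Definition qadd (x y : quat) :=
  mkQ (q0 x + q0 y) (q1 x + q1 y) (q2 x + q2 y) (q3 x + q3 y).
Definition qopp (x : quat) := mkQ (- q0 x) (- q1 x) (- q2 x) (- q3 x).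
Definition qmul (a b : rat) (x y : quat) :=
  mkQ (q0 x * q0 y + a * q1 x * q1 y + b * q2 x * q2 y - a * b * q3 x * q3 y)
      (q0 x * q1 y + q1 x * q0 y - b * q2 x * q3 y + b * q3 x * q2 y)
      (q0 x * q2 y + q2 x * q0 y + a * q1 x * q3 y - a * q3 x * q1 y)
      (q0 x * q3 y + q3 x * q0 y + q1 x * q2 y - q2 x * q1 y).
(* the involution with i* = i, j* = j, hence (ij)* = ji = -ij *)
Definition qstar (x : quat) := mkQ (q0 x) (q1 x) (q2 x) (- q3 x).

Definition qi := mkQ 0 1 0 0.
Definition qj := mkQ 0 0 1 0.

Definition Dring (a b : rat) : InvRing :=
  {| carrier := quat; r0 := qzero; r1 := qone; radd := qadd;
     rmul := qmul a b; ropp := qopp; rstar := qstar |}.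

Definition is_division (a b : rat) : Prop :=
  forall x : quat, x <> qzero -> exists y, qmul a b x y = qone /\ qmul a b y x = qone.

Definition inK (x : quat) : Prop := q2 x = 0 /\ q3 x = 0.

Definition ordering_cone_K (a b : rat) (P : quat -> Prop) : Prop :=
  (forall x, P x -> inK x) /\
  (forall x y, P x -> P y -> P (qadd x y)) /\
  (forall x y, P x -> P y -> P (qmul a b x y)) /\
  (forall x, inK x -> P x \/ P (qopp x)) /\
  (forall x, P x -> P (qopp x) -> x = qzero).

Record fK := mkK { k0 : rat; k1 : rat }.
Definition kzero := mkK 0 0.
Definition kone := mkK 1 0.
Definition kadd (x y : fK) := mkK (k0 x + k0 y) (k1 x + k1 y).
Definition kopp (x : fK) := mkK (- k0 x) (- k1 x).
Definition kmul (a : rat) (x y : fK) :=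
  mkK (k0 x * k0 y + a * k1 x * k1 y) (k0 x * k1 y + k1 x * k0 y).
Definition kconst (c : rat) := mkK c 0.
Definition kconj (x : fK) := mkK (k0 x) (- k1 x).

Record M2 := mkM { m11 : fK; m12 : fK; m21 : fK; m22 : fK }.
Definition mzero := mkM kzero kzero kzero kzero.
Definition mone := mkM kone kzero kzero kone.
Definition madd (X Y : M2) :=
  mkM (kadd (m11 X) (m11 Y)) (kadd (m12 X) (m12 Y))
      (kadd (m21 X) (m21 Y)) (kadd (m22 X) (m22 Y)).
Definition mopp (X : M2) := mkM (kopp (m11 X)) (kopp (m12 X)) (kopp (m21 X)) (kopp (m22 X)).
Definition mmul (a : rat) (X Y : M2) :=
  mkM (kadd (kmul a (m11 X) (m11 Y)) (kmul a (m12 X) (m21 Y)))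
      (kadd (kmul a (m11 X) (m12 Y)) (kmul a (m12 X) (m22 Y)))
      (kadd (kmul a (m21 X) (m11 Y)) (kmul a (m22 X) (m21 Y)))
      (kadd (kmul a (m21 X) (m12 Y)) (kmul a (m22 X) (m22 Y))).
Definition mtr (X : M2) := mkM (m11 X) (m21 X) (m12 X) (m22 X).
Definition matA (b : rat) := mkM kone kzero kzero (kconst b).
Definition matAinv (b : rat) := mkM kone kzero kzero (kconst b^-1).
Definition msharp (a b : rat) (X : M2) := mmul a (mmul a (matAinv b) (mtr X)) (matA b).

Definition M2ring (a b : rat) : InvRing :=
  {| carrier := M2; r0 := mzero; r1 := mone; radd := madd;
     rmul := mmul a; ropp := mopp; rstar := msharp a b |}.

(* Left regular representation w.r.t. the right K-basis (e1,e2) = (1, j):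
   d e_tau = sum_sigma e_sigma lambda(d)_{sigma tau}.
   Writing d = alpha + j beta with alpha = x0 + x1 i, beta = x2 - x3 i
   (since j(x2 - x3 i) = x2 j + x3 ij), and using j gamma = conj(gamma) j, j^2 = b:
     d * 1 = 1 alpha + j beta,   d * j = 1 (b conj beta) + j conj alpha. *)
Definition lam (b : rat) (d : quat) : M2 :=
  let alpha := mkK (q0 d) (q1 d) in
  let beta := mkK (q2 d) (- q3 d) in
  mkM alpha (mkK (b * q2 d) (b * q3 d)) (* = b * conj beta *) beta (kconj alpha).

(* Main.v *)
Require Import Defs.
From Stdlib Require Import Ring Field.
From HB Require Import structures.
From mathcomp Require Import all_boot all_order all_algebra all_field.
Import Order.TTheory GRing.Theory Num.Theory.
Local Open Scope ring_scope.
Ltac norm_inst T :=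
  let ca := lazymatch constr:(fun x y : T => x + y) with fun x y => @Algebra.add ?i _ _ => i end in
  let cm := lazymatch constr:(fun x y : T => x * y) with fun x y => @GRing.mul ?i _ _ => i end in
  let cn := lazymatch constr:(fun x : T => - x) with fun x => @Algebra.opp ?i _ => i end in
  let cz := lazymatch constr:(0 : T) with @Algebra.zero ?i => i end in
  let co := lazymatch constr:(1 : T) with GRing.one ?i => i end in
  let cv := lazymatch constr:(fun x : T => x^-1) with fun x => @GRing.inv ?i _ => i end in
  let cnm := lazymatch constr:(fun (x : T) n => x *+ n) with fun x n => @Algebra.natmul ?i _ _ => i end in
  repeat match goal with
  | |- context [@Algebra.add ?i] => assert_fails (constr_eq i ca); change i with ca
  | |- context [@GRing.mul ?i] => assert_fails (constr_eq i cm); change i with cm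
  | |- context [@Algebra.opp ?i] => assert_fails (constr_eq i cn); change i with cn
  | |- context [@Algebra.zero ?i] => assert_fails (constr_eq i cz); change i with cz
  | |- context [GRing.one ?i] => assert_fails (constr_eq i co); change i with co
  | |- context [@GRing.inv ?i] => assert_fails (constr_eq i cv); change i with cv
  | |- context [@Algebra.natmul ?i] => assert_fails (constr_eq i cnm); change i with cnm
  end;
  match goal with |- @eq _ ?x ?y => let U := type of x in change (@eq U x y) end.

Lemma gen_ft (F : fieldType) : field_theory (0:F) 1 +%R *%R (fun x y => x - y) -%R (fun x y => x / y) GRing.inv eq.
Proof.
split=> //.
- split=> //; [exact: add0r|exact: addrC|exact: addrA|exact: mul1r|exact: mulrC|exact: mulrA|exact: mulrDl|exact: subrr].
- by move=> /eqP; rewrite oner_eq0.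
- by move=> p hp; rewrite mulVf //; apply/eqP.
Qed.

Local Notation QZ := (@Algebra.zero rat_rat__canonical__Algebra_BaseAddUMagma) (only parsing).
Local Notation QO := (GRing.one rat_rat__canonical__GRing_PzSemiRing) (only parsing).
Local Notation QA := (@Algebra.add rat_rat__canonical__Algebra_BaseAddMagma) (only parsing).
Local Notation QM := (@GRing.mul rat_rat__canonical__GRing_PzSemiRing) (only parsing).
Local Notation QN := (@Algebra.opp rat_rat__canonical__Algebra_BaseZmodule) (only parsing).
Local Notation QV := (@GRing.inv rat_rat__canonical__GRing_UnitRing) (only parsing).
Definition qft1 := (gen_ft _ : @field_theory (Algebra.BaseAddMagma.sort rat_rat__canonical__Algebra_BaseAddMagma) QZ QO QA QM (fun x y => QA x (QN y)) QN (fun x y => QM x (QV y)) QV eq).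
Definition qft2 := (gen_ft _ : @field_theory (GRing.PzSemiRing.sort rat_rat__canonical__GRing_PzSemiRing) QZ QO QA QM (fun x y => QA x (QN y)) QN (fun x y => QM x (QV y)) QV eq).
Definition qft3 := (gen_ft _ : @field_theory (Algebra.BaseZmodule.sort rat_rat__canonical__Algebra_BaseZmodule) QZ QO QA QM (fun x y => QA x (QN y)) QN (fun x y => QM x (QV y)) QV eq).
Definition qft4 := (gen_ft _ : @field_theory (Algebra.BaseAddUMagma.sort rat_rat__canonical__Algebra_BaseAddUMagma) QZ QO QA QM (fun x y => QA x (QN y)) QN (fun x y => QM x (QV y)) QV eq).
Definition qft5 := (gen_ft _ : @field_theory (GRing.UnitRing.sort rat_rat__canonical__GRing_UnitRing) QZ QO QA QM (fun x y => QA x (QN y)) QN (fun x y => QM x (QV y)) QV eq).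
Definition qft6 := (gen_ft _ : @field_theory rat QZ QO QA QM (fun x y => QA x (QN y)) QN (fun x y => QM x (QV y)) QV eq).
Add Field qF1 : qft1. Add Field qF2 : qft2. Add Field qF3 : qft3.
Add Field qF4 : qft4. Add Field qF5 : qft5. Add Field qF6 : qft6.

Local Notation CZ := (@Algebra.zero Algebraics.Implementation_type__canonical__Algebra_BaseAddUMagma) (only parsing).
Local Notation CO := (GRing.one Algebraics.Implementation_type__canonical__GRing_PzSemiRing) (only parsing).
Local Notation CA := (@Algebra.add Algebraics.Implementation_type__canonical__Algebra_BaseAddMagma) (only parsing).
Local Notation CM := (@GRing.mul Algebraics.Implementation_type__canonical__GRing_PzSemiRing) (only parsing).
Local Notation CN := (@Algebra.opp Algebraics.Implementation_type__canonical__Algebra_BaseZmodule) (only parsing).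
Local Notation CV := (@GRing.inv Algebraics.Implementation_type__canonical__GRing_UnitRing) (only parsing).
Definition cft1 := (gen_ft _ : @field_theory (Algebra.BaseAddMagma.sort Algebraics.Implementation_type__canonical__Algebra_BaseAddMagma) CZ CO CA CM (fun x y => CA x (CN y)) CN (fun x y => CM x (CV y)) CV eq).
Definition cft2 := (gen_ft _ : @field_theory (GRing.PzSemiRing.sort Algebraics.Implementation_type__canonical__GRing_PzSemiRing) CZ CO CA CM (fun x y => CA x (CN y)) CN (fun x y => CM x (CV y)) CV eq).
Definition cft3 := (gen_ft _ : @field_theory (Algebra.BaseZmodule.sort Algebraics.Implementation_type__canonical__Algebra_BaseZmodule) CZ CO CA CM (fun x y => CA x (CN y)) CN (fun x y => CM x (CV y)) CV eq).
Definition cft4 := (gen_ft _ : @field_theory (Algebra.BaseAddUMagma.sort Algebraics.Implementation_type__canonical__Algebra_BaseAddUMagma) CZ CO CA CM (fun x y => CA x (CN y)) CN (fun x y => CM x (CV y)) CV eq).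
Definition cft5 := (gen_ft _ : @field_theory (GRing.UnitRing.sort Algebraics.Implementation_type__canonical__GRing_UnitRing) CZ CO CA CM (fun x y => CA x (CN y)) CN (fun x y => CM x (CV y)) CV eq).
Definition cft6 := (gen_ft _ : @field_theory algC CZ CO CA CM (fun x y => CA x (CN y)) CN (fun x y => CM x (CV y)) CV eq).
Add Field cF1 : cft1. Add Field cF2 : cft2. Add Field cF3 : cft3.
Add Field cF4 : cft4. Add Field cF5 : cft5. Add Field cF6 : cft6.

Ltac rq := norm_inst rat; first [ring | field].

Section PartI.
Variables (a b : rat) (N : quat -> Prop).
Hypothesis hN : ordering_cone_K a b N.

Lemma N0 : N qzero.
Proof.
case: hN => _ [_ [_ [htot _]]].
have : inK qzero by split.
move/htot=> [] //.
Qed.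

Lemma Nsq x : inK x -> N (qmul a b x x).
Proof.
case: hN => _ [_ [hmul [htot _]]] hx.
case: (htot x hx) => h; first exact: hmul.
have -> : qmul a b x x = qmul a b (qopp x) (qopp x).
  by case: x {hx h} => x0 x1 x2 x3; rewrite /qmul /qopp /=; congr mkQ; rq.
exact: hmul.
Qed.

Lemma Nnat m : N (mkQ m%:R 0 0 0).
Proof.
case: hN => _ [hadd _].
elim: m => [|m IH]; first exact: N0.
have -> : mkQ m.+1%:R 0 0 0 = qadd (mkQ m%:R 0 0 0) (qmul a b qone qone).
  rewrite /qadd /qmul /qone /= mulrSr; congr mkQ; rq.
by apply: hadd => //; apply: Nsq.
Qed.

Lemma Nb : 0 < b -> N (mkQ b 0 0 0).
Proof.
move=> hb.
case: hN => _ [_ [hmul _]].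
set d : rat := (denq b)%:~R.
have hd : d != 0 by rewrite /d intr_eq0 denq_neq0.
set m := absz (numq b * denq b).
have hm : (m%:R : rat) = b * d * d.
  have -> : (m%:R : rat) = ((m%:Z)%:~R) by [].
  rewrite /m gez0_abs; last by rewrite mulr_ge0 // ?numq_ge0 ?ltW // denq_gt0.
  rewrite intrM -[in RHS](divq_num_den b) /d. norm_inst rat. field.
  by apply/eqP.
have -> : mkQ b 0 0 0 = qmul a b (mkQ m%:R 0 0 0) (qmul a b (mkQ d^-1 0 0 0) (mkQ d^-1 0 0 0)).
  rewrite /qmul /= hm; congr mkQ; rq; try (apply/eqP; exact: hd).
apply: hmul; first exact: Nnat.
by apply: Nsq.
Qed.
End PartI.

Lemma noM (a b : rat) (hb : 0 < b) (N : quat -> Prop) (hN : ordering_cone_K a b N) :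
  ~ (exists M : quat -> Prop, herm_cone (Dring a b) M /\
          (forall x, N x <-> (M x /\ inK x))).
Proof.
move=> [M [[_ [_ [_ [hconj hanti]]]] hNM]].
have hNb := @Nb a b N hN hb.
case: hN => _ [_ [hmul [htot _]]].
have key : forall u : rat, u != 0 -> N (mkQ 0 u 0 0) -> False.
  move=> u hu hx.
  set y := qmul a b (mkQ b 0 0 0) (mkQ 0 u 0 0).
  have hMy : M y by apply hNM; apply: hmul.
  have hMx : M (mkQ 0 u 0 0) by apply hNM.
  have := hconj qj _ hMx; rewrite /=.
  have -> : qmul a b (qmul a b qj (mkQ 0 u 0 0)) (qstar qj) = qopp y.
    by rewrite /y /qmul /qopp /qstar /qj /=; congr mkQ; rq.
  move=> hMy'.
  have := hanti _ hMy hMy'; rewrite /y /qmul /qzero /=.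
  move=> [] _ h _ _.
  have hbu : b * u = 0 by rewrite -h; rq.
  move/eqP: hbu; rewrite mulf_eq0 (negbTE hu) orbF => /eqP hb0.
  by move: hb; rewrite hb0 ltxx.
have hK : inK qi by split.
case: (htot _ hK) => h.
  by apply: (key 1) => //; rewrite oner_eq0.
apply: (key (-1)); first by rewrite oppr_eq0 oner_eq0.
by move: h; rewrite /qopp /qi /= oppr0.
Qed.

Ltac rc := norm_inst algC; first [ring | field].

Lemma qD (x y : rat) : ratr (x + y) = ratr x + ratr y :> algC. Proof. exact: rmorphD. Qed.
Lemma qM (x y : rat) : ratr (x * y) = ratr x * ratr y :> algC. Proof. exact: rmorphM. Qed.
Lemma qN (x : rat) : ratr (- x) = - ratr x :> algC. Proof. exact: rmorphN. Qed.
Lemma qV (x : rat) : ratr (x^-1) = (ratr x)^-1 :> algC. Proof. exact: fmorphV. Qed.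
Lemma qZ : ratr 0 = 0 :> algC. Proof. exact: rmorph0. Qed.
Lemma qO : ratr 1 = 1 :> algC. Proof. exact: rmorph1. Qed.

Definition phi (t : algC) (x : fK) : algC := ratr (k0 x) + ratr (k1 x) * t.

Lemma phi_add t x y : phi t (kadd x y) = phi t x + phi t y.
Proof. rewrite /phi /= !qD; rc. Qed.
Lemma phi_opp t x : phi t (kopp x) = - phi t x.
Proof. rewrite /phi /= !qN; rc. Qed.
Lemma phi_mul a t (ht : t * t = ratr a) x y : phi t (kmul a x y) = phi t x * phi t y.
Proof. rewrite /phi /= !qD !qM -ht; rc. Qed.
Lemma phi_const t c : phi t (kconst c) = ratr c.
Proof. by rewrite /phi /= qZ mul0r addr0. Qed.
Lemma phi_one t : phi t kone = 1.
Proof. by rewrite /phi /= qZ qO mul0r addr0. Qed.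
Lemma phi_zero t : phi t kzero = 0.
Proof. by rewrite /phi /= qZ mul0r addr0. Qed.
Lemma ratr_real (x : rat) : (ratr x : algC) \is Num.real.
Proof. by rewrite realE ler0q lerq0 le_total. Qed.
Lemma phi_real t x : t \is Num.real -> phi t x \is Num.real.
Proof. move=> ht; rewrite /phi; apply: rpredD; [exact: ratr_real | apply: rpredM => //; exact: ratr_real]. Qed.

Definition Qf (b : rat) (t : algC) (X : M2) (v1 v2 : algC) : algC :=
  phi t (m11 X) * v1 * v1 + (phi t (m12 X) + ratr b * phi t (m21 X)) * v1 * v2
  + ratr b * phi t (m22 X) * v2 * v2.

Definition Lc (a b : rat) (t : algC) (X : M2) : Prop :=
  X = msharp a b X /\ forall v1 v2 : algC, v1 \is Num.real -> v2 \is Num.real -> 0 <= Qf b t X v1 v2.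

Definition symc (b : rat) (X : M2) : Prop :=
  k0 (m12 X) = b * k0 (m21 X) /\ k1 (m12 X) = b * k1 (m21 X).

Lemma sym_iff a b (hb : b != 0) X : X = msharp a b X <-> symc b X.
Proof.
case: X => [[x0 x1] [y0 y1] [z0 z1] [w0 w1]]; rewrite /symc /=; split.
- move=> h; split.
  + have := f_equal (fun X => k0 (m12 X)) h; rewrite /= => ->; rq.
  + have := f_equal (fun X => k1 (m12 X)) h; rewrite /= => ->; rq.
- move=> [h0 h1]; rewrite /msharp /mmul /mtr /matA /matAinv /kmul /kadd /kconst /kone /kzero /= h0 h1.
  congr mkM; congr mkK; rq; try (apply/eqP; exact: hb).
Qed.

Lemma sq_ge0 (v : algC) : v \is Num.real -> 0 <= v * v.
Proof. by move=> h; rewrite -expr2 -realEsqr. Qed.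

Section Cone.
Variables (a b : rat) (t : algC).
Hypotheses (hb : 0 < b) (ht2 : t * t = ratr a) (htr : t \is Num.real)
  (hinj : forall x, phi t x = 0 -> x = kzero).

Let hb0 : b != 0. Proof. by rewrite gt_eqF. Qed.
Let hbC : (ratr b : algC) != 0. Proof. by rewrite fmorph_eq0. Qed.
Let hbC0 : (0 : algC) <= ratr b. Proof. by rewrite ler0q ltW. Qed.

Lemma Lc_one : Lc a b t mone.
Proof.
split.
  by apply/(@sym_iff a b hb0 _); rewrite /symc /=; split; rq.
move=> v1 v2 h1 h2; rewrite /Qf /= phi_one phi_zero.
rewrite (_ : _ + _ = v1 * v1 + ratr b * (v2 * v2)); last by rc.
by apply: addr_ge0; [exact: sq_ge0 | apply: mulr_ge0 => //; exact: sq_ge0].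
Qed.

Lemma Lc_add X Y : Lc a b t X -> Lc a b t Y -> Lc a b t (madd X Y).
Proof.
move=> [hX qX] [hY qY]; split.
  apply/(@sym_iff a b hb0 _); move/(@sym_iff a b hb0 _): hX => [x0 x1]; move/(@sym_iff a b hb0 _): hY => [y0 y1].
  by rewrite /symc /= x0 x1 y0 y1; split; rq.
move=> v1 v2 h1 h2.
rewrite (_ : Qf b t (madd X Y) v1 v2 = Qf b t X v1 v2 + Qf b t Y v1 v2).
  by apply: addr_ge0; [exact: qX | exact: qY].
by rewrite /Qf /= !phi_add; rc.
Qed.

Lemma Lc_conj c X : Lc a b t X -> Lc a b t (mmul a (mmul a c X) (msharp a b c)).
Proof.
move=> [hX qX]; split.
  apply/(@sym_iff a b hb0 _); move/(@sym_iff a b hb0 _): hX.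
  case: c => [[c0 c1] [d0 d1] [e0 e1] [f0 f1]].
  case: X {qX} => [[x0 x1] [y0 y1] [z0 z1] [w0 w1]].
  rewrite /symc /= => [[h0 h1]].
  rewrite /mmul /msharp /mtr /matA /matAinv /kmul /kadd /kconst /kone /kzero /= h0 h1.
  split; rq; apply/eqP; exact: hb0.
move=> v1 v2 h1 h2.
set w1 := phi t (m11 c) * v1 + ratr b * phi t (m21 c) * v2.
set w2 := phi t (m12 c) * v1 / ratr b + phi t (m22 c) * v2.
have -> : Qf b t (mmul a (mmul a c X) (msharp a b c)) v1 v2 = Qf b t X w1 w2.
  rewrite /Qf /w1 /w2; cbn [m11 m12 m21 m22 mmul msharp mtr matA matAinv].
  rewrite !(phi_add, @phi_mul a t ht2, phi_const, phi_one, phi_zero, qV).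
  rc; apply/eqP; exact: hbC.
have hr x := @phi_real t x htr.
apply: qX; rewrite /w1 /w2;
  repeat first [exact: ratr_real | exact: hr | assumption | (rewrite -qV; exact: ratr_real) | apply: rpredD | apply: rpredM].
Qed.

Lemma Lc_anti X : Lc a b t X -> Lc a b t (mopp X) -> X = mzero.
Proof.
move=> [hX qX] [_ qnX].
have qn v1 v2 : Qf b t (mopp X) v1 v2 = - Qf b t X v1 v2 by rewrite /Qf /= !phi_opp; rc.
have q0 v1 v2 : v1 \is Num.real -> v2 \is Num.real -> Qf b t X v1 v2 = 0.
  move=> r1 r2; have := qX v1 v2 r1 r2; have := qnX v1 v2 r1 r2.
  rewrite qn oppr_ge0 => h h'; by apply/le_anti/andP.
move/(@sym_iff a b hb0 _): hX => [s0 s1].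
have e11 : phi t (m11 X) = 0 by rewrite -(q0 1 0 (real1 _) (real0 _)) /Qf; rc.
have e22 : phi t (m22 X) = 0.
  have : ratr b * phi t (m22 X) = 0 by rewrite -(q0 0 1 (real0 _) (real1 _)) /Qf; rc.
  by move/eqP; rewrite mulf_eq0 (negbTE hbC) /= => /eqP.
have e12 : phi t (m12 X) = ratr b * phi t (m21 X) by rewrite /phi s0 s1 !qM; rc.
have e21 : phi t (m21 X) = 0.
  have : (ratr b + ratr b) * phi t (m21 X) = 0.
    by rewrite -(q0 1 1 (real1 _) (real1 _)) /Qf e11 e22 e12; rc.
  move/eqP; rewrite mulf_eq0 => /orP [|/eqP //].
  by rewrite gt_eqF // addr_gt0 // ltr0q.
have e12' : phi t (m12 X) = 0 by rewrite e12 e21 mulr0.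
case: X {qX qnX qn q0 s0 s1 e12} e11 e12' e21 e22 => p q r s /= /hinj -> /hinj -> /hinj -> /hinj ->.
by [].
Qed.

Lemma Lc_cone : herm_cone (M2ring a b) (Lc a b t).
Proof.
split; first by move=> r [hr _] /=; rewrite -hr.
split; first exact: Lc_one.
split; first exact: Lc_add.
split; first exact: Lc_conj.
exact: Lc_anti.
Qed.
End Cone.

Lemma nosq a b r : a = r * r -> ~ is_division a b.
Proof.
move=> har hdiv.
set x := mkQ r 1 0 0.
have hx : x <> qzero by move=> /(f_equal q1) /= /eqP; rewrite oner_eq0.
case: (hdiv x hx) => z [hxz _].
set y := mkQ r (-1) 0 0.
have : y = qzero.
  transitivity (qmul a b y (qmul a b x z)).
    by rewrite hxz /qmul /y /qone /=; congr mkQ; rq.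
  by case: z {hxz} => z0 z1 z2 z3; rewrite /qmul /y /x /qzero /= har; congr mkQ; rq.
by move=> /(f_equal q1) /= /eqP; rewrite oppr_eq0 oner_eq0.
Qed.

Lemma phi_inj a b (hdiv : is_division a b) (t : algC) (ht2 : t * t = ratr a) x :
  phi t x = 0 -> x = kzero.
Proof.
case: x => x0 x1; rewrite /phi /=.
case: (eqVneq x1 0) => [->|h1].
  by rewrite qZ mul0r addr0 => /eqP; rewrite fmorph_eq0 => /eqP ->.
move=> h; exfalso.
have h1C : (ratr x1 : algC) != 0 by rewrite fmorph_eq0.
have htr : t = ratr (- x0 / x1).
  transitivity ((ratr x0 + ratr x1 * t - ratr x0) / ratr x1).
    rc; apply/eqP; exact: h1C.
  rewrite h qM qN qV; rc; apply/eqP; exact: h1C.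
apply: (@nosq a b (- x0 / x1)) hdiv.
have e : (ratr a : algC) = ratr (- x0 / x1 * (- x0 / x1)) by rewrite qM -htr ht2.
have e2 : (ratr (a - - x0 / x1 * (- x0 / x1)) : algC) == 0 by rewrite qD qN e subrr.
by move: e2; rewrite fmorph_eq0 subr_eq0 => /eqP.
Qed.

Lemma Qf_swap b (t beta : algC) (hbeta : beta * beta = ratr b) (hbe : beta != 0) d v1 v2 :
  Qf b t (lam b d) v1 v2 = Qf b (- t) (lam b d) (beta * v2) (v1 / beta).
Proof.
rewrite /Qf /lam /phi /= !qM !qN -hbeta; rc; apply/eqP; exact: hbe.
Qed.

Theorem mainTheorem16 (a b : rat) (ha : 0 < a) (hb : 0 < b)
  (hdiv : is_division a b) :
  (forall N : quat -> Prop, ordering_cone_K a b N ->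
     N (mkQ b 0 0 0) /\
     ~ (exists M : quat -> Prop, herm_cone (Dring a b) M /\
          (forall x, N x <-> (M x /\ inK x)))) /\
  (exists L1 L2 : M2 -> Prop,
     herm_cone (M2ring a b) L1 /\ herm_cone (M2ring a b) L2 /\
     (exists X, ~ (L1 X <-> L2 X)) /\
     (forall d : quat, L1 (lam b d) <-> L2 (lam b d))).
Proof.
split.
  move=> N hN; split; first exact: (@Nb a b N hN hb).
  exact: (@noM a b hb N hN).
set s : algC := sqrtC (ratr a).
have hs2 : s * s = ratr a by rewrite -expr2 sqrtCK.
have hsr : s \is Num.real by apply: sqrtC_real; rewrite ler0q ltW.
have hs0 : 0 < s by rewrite sqrtC_gt0 ltr0q.
have hms2 : (- s) * (- s) = ratr a by rewrite mulrNN.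
have hmsr : (- s) \is Num.real by rewrite rpredN.
set be : algC := sqrtC (ratr b).
have hbe2 : be * be = ratr b by rewrite -expr2 sqrtCK.
have hber : be \is Num.real by apply: sqrtC_real; rewrite ler0q ltW.
have hbe0 : be != 0 by rewrite gt_eqF // sqrtC_gt0 ltr0q.
exists (Lc a b s), (Lc a b (- s)).
split; first exact: (@Lc_cone a b s hb hs2 hsr (@phi_inj a b hdiv s hs2)).
split; first exact: (@Lc_cone a b (- s) hb hms2 hmsr (@phi_inj a b hdiv (- s) hms2)).
have hbr : (ratr b : algC) \is Num.real by exact: ratr_real.
split.
  exists (mkM (mkK 0 1) kzero kzero kzero) => h.
  have hL1 : Lc a b s (mkM (mkK 0 1) kzero kzero kzero).
    split.
      apply/(@sym_iff a b _ _); first by rewrite gt_eqF.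
      by rewrite /symc /=; split; rq.
    move=> v1 v2 r1 r2.
    rewrite (_ : Qf _ _ _ _ _ = s * (v1 * v1)); last by rewrite /Qf /phi /= qZ qO; rc.
    by apply: mulr_ge0; [exact: ltW | exact: sq_ge0].
  have [_ hq] := (proj1 h) hL1.
  have := hq 1 0 (real1 _) (real0 _).
  rewrite (_ : Qf _ _ _ _ _ = - s); last by rewrite /Qf /phi /= qZ qO; rc.
  by rewrite oppr_ge0 => /(lt_le_trans hs0); rewrite ltxx.
have hbv : be^-1 \is Num.real by rewrite realV.
move=> d; split; move=> [hsym hq]; split => // v1 v2 r1 r2.
- rewrite (@Qf_swap b (- s) be hbe2 hbe0) opprK.
  apply: hq.
    by apply: rpredM.
  by apply: rpredM => //; exact: hbv.
- rewrite (@Qf_swap b s be hbe2 hbe0).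
  apply: hq.
    by apply: rpredM.
  by apply: rpredM => //; exact: hbv.
Qed.
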